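(* Let $d\ge2$, $b:=2^d$, $N\in\mathbb{N}$, and $L:=\min\{\ell\in\{0,1,2,\dots\}:b^\ell\ge N\}$. Then $2^{-L}\le N^{-1/d}\le2\cdot2^{-L}$. For every $\ell\in\{0,1,\dots,L-2\}$ and every word $u\in\{0,\dots,b-1\}^\ell$, \[ \Bigl\lfloor\frac{N}{b^\ell}\Bigr\rfloor\le M(u)\le\Bigl\lceil\frac{N}{b^\ell}\Bigr\rceil. \] If $N>b^2$, then $M(u)\ge b$ for all words $u$ of length $L-2$.
   Context: $M(u):=\#\{1\le n\le N:x_n\in C_u\}$, where $(x_n)$ is the dyadic digital sequence and $C_u$ the dyadic cube defined as follows. For $a\in\{0,\dots,b-1\}$ write $a=\sum_{j=1}^d\varepsilon_j(a)2^{j-1}$ with $\varepsilon_j(a)\in\{0,1\}$; for $m\ge0$ write $m=\sum_{k\ge0}a_k(m)b^k$ with base-$b$ digits, all but finitely many zero. Set $x_n:=\bigl(\sum_{k\ge0}\varepsilon_1(a_k(n-1))2^{-(k+1)},\dots,\sum_{k\ge0}\varepsilon_d(a_k(n-1))2^{-(k+1)}\bigr)$, $n\ge1$. For $u=(u_0,\dots,u_{\ell-1})$, $C_u:=\prod_{j=1}^d\bigl[\sum_{k=0}^{\ell-1}\varepsilon_j(u_k)2^{-(k+1)},\sum_{k=0}^{\ell-1}\varepsilon_j(u_k)2^{-(k+1)}+2^{-\ell}\bigr)$; for $\ell=0$ the empty word gives $C_\varnothing=[0,1)^d$. *)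

(* Defs.v *)
From Stdlib Require Import Reals Lra Lia List Bool.
Import ListNotations.
Open Scope R_scope.

Definition base (d : nat) : nat := (2 ^ d)%nat.

Definition eps (j a : nat) : nat := ((a / 2 ^ (j - 1)) mod 2)%nat.

Definition digit (d k m : nat) : nat := ((m / base d ^ k) mod base d)%nat.

(* j-th coordinate of x_n = sum_{k>=0} eps_j(a_k(n-1)) 2^{-(k+1)}.
   Since b >= 2, a_k(n-1) = 0 for all k >= n (as b^k >= 2^k > n-1),
   so the (finitely supported) series equals its partial sum over k < n. *)
Definition x_coord (d n j : nat) : R :=
  fold_right Rplus 0
    (map (fun k => INR (eps j (digit d k (n - 1))) / 2 ^ (S k)) (seq 0 n)).

Definition corner (u : list nat) (j : nat) : R :=
  fold_right Rplus 0
    (map (fun k => INR (eps j (nth k u 0%nat)) / 2 ^ (S k)) (seq 0 (length u))).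

Definition in_cube_b (d : nat) (u : list nat) (x : nat -> R) : bool :=
  forallb (fun j =>
    andb (if Rle_dec (corner u j) (x j) then true else false)
    (if Rlt_dec (x j) (corner u j + / 2 ^ (length u)) then true else false))
  (seq 1 d).

Definition M (d N : nat) (u : list nat) : nat :=
  length (filter (fun n => in_cube_b d u (x_coord d n)) (seq 1 N)).

Definition is_word (d l : nat) (u : list nat) : Prop :=
  length u = l /\ Forall (fun a => (a < base d)%nat) u.

Definition floor_div (N q : nat) : nat := (N / q)%nat.
Definition ceil_div (N q : nat) : nat := ((N + q - 1) / q)%nat.

(* Main.v *)
Require Import Defs.
From Stdlib Require Import Reals Lra Lia List.
Open Scope R_scope.

Lemma base_pos d : (0 < base d)%nat.
Proof. unfold base. apply Nat.neq_0_lt_0, Nat.pow_nonzero. lia. Qed.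

Definition Ssum (d j m K : nat) : R :=
  fold_right Rplus 0 (map (fun k => INR (eps j (digit d k m)) / 2 ^ (S k)) (seq 0 K)).

Lemma sum_half (f : nat -> R) l :
  fold_right Rplus 0 (map (fun k => f k / 2) l) = fold_right Rplus 0 (map f l) / 2.
Proof. induction l; simpl; [lra| rewrite IHl; lra]. Qed.

Lemma sum_app (l1 l2 : list R) :
  fold_right Rplus 0 (l1 ++ l2) = fold_right Rplus 0 l1 + fold_right Rplus 0 l2.
Proof. induction l1; simpl; [lra | rewrite IHl1; lra]. Qed.

Lemma eps_le1 j a : (eps j a <= 1)%nat.
Proof. unfold eps. pose proof (Nat.mod_upper_bound (a / 2^(j-1)) 2). lia. Qed.

Lemma eps_0 j : eps j 0 = 0%nat.
Proof. unfold eps. rewrite Nat.Div0.div_0_l, Nat.Div0.mod_0_l; auto. Qed.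

Lemma digit_S d k m : digit d (S k) m = digit d k (m / base d).
Proof. unfold digit. rewrite Nat.pow_succ_r', Nat.Div0.div_div. reflexivity. Qed.

Lemma digit_0 d m : digit d 0 m = (m mod base d)%nat.
Proof. unfold digit. rewrite Nat.pow_0_r, Nat.div_1_r. reflexivity. Qed.

Lemma pow2_S k : / 2 ^ S k = / 2 ^ k / 2.
Proof. simpl. field. apply pow_nonzero. lra. Qed.

Lemma Ssum_cons d j m K :
  Ssum d j m (S K) = (INR (eps j (m mod base d)) + Ssum d j (m / base d) K) / 2.
Proof.
  unfold Ssum. change (seq 0 (S K)) with (0%nat :: seq 1 K). rewrite <- seq_shift. cbn [map fold_right]. rewrite map_map.
  rewrite digit_0.
  rewrite (map_ext (fun x => INR (eps j (digit d (S x) m)) / 2 ^ S (S x))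
     (fun k => (INR (eps j (digit d k (m / base d))) / 2 ^ S k) / 2)).
  - rewrite sum_half. simpl. field.
  - intros k. rewrite digit_S. unfold Rdiv. rewrite (pow2_S (S k)). field. apply pow_nonzero; lra.
Qed.

Lemma Ssum_snoc d j m K :
  Ssum d j m (S K) = Ssum d j m K + INR (eps j (digit d K m)) / 2 ^ S K.
Proof.
  unfold Ssum. rewrite seq_S, map_app, sum_app. simpl. ring.
Qed.

Lemma digit_big d K m : (m < base d ^ K)%nat -> digit d K m = 0%nat.
Proof. intros H. unfold digit. rewrite Nat.div_small by auto. apply Nat.Div0.mod_0_l. Qed.

Lemma Ssum_ext d j m K t : (m < base d ^ K)%nat -> Ssum d j m (K + t) = Ssum d j m K.
Proof.
  intros H. induction t.
  - rewrite Nat.add_0_r. reflexivity.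
  - rewrite Nat.add_succ_r, Ssum_snoc, IHt, digit_big, eps_0.
    + simpl INR. lra.
    + eapply Nat.lt_le_trans; [exact H|]. apply Nat.pow_le_mono_r; [pose proof (base_pos d); lia| lia].
Qed.

Lemma Ssum_bounds d j m K : 0 <= Ssum d j m K <= 1 - / 2 ^ K.
Proof.
  revert m; induction K; intros m.
  - unfold Ssum. simpl. lra.
  - rewrite Ssum_cons, pow2_S. specialize (IHK (m / base d)%nat).
    pose proof (eps_le1 j (m mod base d)).
    assert (0 <= INR (eps j (m mod base d)) <= 1) by (split; [apply pos_INR| replace 1 with (INR 1) by reflexivity; apply le_INR; auto]).
    lra.
Qed.

Lemma corner_cons a u j : corner (a :: u) j = (INR (eps j a) + corner u j) / 2.
Proof.
  unfold corner. change (length (a :: u)) with (S (length u)). change (seq 0 (S (length u))) with (0%nat :: seq 1 (length u)). rewrite <- seq_shift. cbn [map fold_right]. rewrite map_map.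
  rewrite (map_ext (fun x => INR (eps j (nth (S x) (a :: u) 0%nat)) / 2 ^ S (S x))
     (fun k => (INR (eps j (nth k u 0%nat)) / 2 ^ S k) / 2)).
  - rewrite sum_half. simpl. field.
  - intros k. simpl nth. unfold Rdiv. rewrite (pow2_S (S k)). field. apply pow_nonzero; lra.
Qed.

Lemma corner_bounds u j : 0 <= corner u j /\ corner u j + / 2 ^ length u <= 1.
Proof.
  induction u.
  - unfold corner. simpl. lra.
  - rewrite corner_cons. simpl length. rewrite pow2_S.
    pose proof (eps_le1 j a).
    assert (0 <= INR (eps j a) <= 1) by (split; [apply pos_INR| replace 1 with (INR 1) by reflexivity; apply le_INR; auto]).
    lra.
Qed.

Lemma eps01 j a : INR (eps j a) = 0 \/ INR (eps j a) = 1.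
Proof. pose proof (eps_le1 j a). destruct (eps j a) as [|[|]]; simpl; auto; lia. Qed.

Lemma INR_eps_inj j a a' : INR (eps j a) = INR (eps j a') -> eps j a = eps j a'.
Proof. apply INR_eq. Qed.

Lemma cube_char d j u : forall m K, (length u <= K)%nat ->
  (corner u j <= Ssum d j m K < corner u j + / 2 ^ length u <->
   forall k, (k < length u)%nat -> eps j (digit d k m) = eps j (nth k u 0%nat)).
Proof.
  induction u as [|a u IH]; intros m K HK.
  - unfold corner; simpl. pose proof (Ssum_bounds d j m K).
    assert (0 < / 2 ^ K) by (apply Rinv_0_lt_compat, pow_lt; lra).
    split; intros; [lia| lra].
  - destruct K as [|K]; [simpl in HK; lia|].
    simpl length in *.
    rewrite Ssum_cons, corner_cons, pow2_S.
    specialize (IH (m / base d)%nat K ltac:(lia)).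
    pose proof (Ssum_bounds d j (m / base d) K).
    pose proof (corner_bounds u j).
    assert (0 < / 2 ^ K) by (apply Rinv_0_lt_compat, pow_lt; lra).
    assert (0 < / 2 ^ length u) by (apply Rinv_0_lt_compat, pow_lt; lra).
    pose proof (eps01 j (m mod base d)) as Hc.
    pose proof (eps01 j a) as He.
    split.
    + intros Hin.
      assert (Hce : INR (eps j (m mod base d)) = INR (eps j a)) by
        (destruct Hc as [Hc|Hc]; destruct He as [He|He]; rewrite Hc, He in *; lra).
      assert (Hrest : forall k, (k < length u)%nat -> eps j (digit d k (m / base d)) = eps j (nth k u 0%nat)).
      { apply IH. lra. }
      intros [|k] Hk.
      * rewrite digit_0. simpl. apply INR_eq. exact Hce.
      * rewrite digit_S. simpl. apply Hrest. lia.
    + intros Hall.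
      assert (Hce : eps j (m mod base d) = eps j a).
      { rewrite <- digit_0. apply (Hall 0%nat). lia. }
      assert (Hrest : corner u j <= Ssum d j (m / base d) K < corner u j + / 2 ^ length u).
      { apply IH. intros k Hk. rewrite <- digit_S. apply (Hall (S k)). lia. }
      rewrite Hce. lra.
Qed.

Lemma eps_inj d a a' : (a < base d)%nat -> (a' < base d)%nat ->
  (forall j, (1 <= j <= d)%nat -> eps j a = eps j a') -> a = a'.
Proof.
  intros Ha Ha' H. apply Nat.bits_inj. intros i.
  assert (Hm : ((a / 2 ^ i) mod 2 = (a' / 2 ^ i) mod 2)%nat).
  { destruct (Nat.lt_ge_cases i d) as [Hi|Hi].
    - specialize (H (S i) ltac:(lia)). unfold eps in H.
      replace (S i - 1)%nat with i in H by lia. exact H.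
    - unfold base in *.
      assert (2 ^ d <= 2 ^ i)%nat by (apply Nat.pow_le_mono_r; lia).
      rewrite !Nat.div_small by lia. reflexivity. }
  rewrite <- !Nat.testbit_spec' in Hm.
  destruct (Nat.testbit a i), (Nat.testbit a' i); simpl in Hm; auto; discriminate.
Qed.

Definition val (d : nat) (u : list nat) : nat :=
  fold_right (fun a acc => a + base d * acc)%nat 0%nat u.

Lemma val_lt d u : Forall (fun a => (a < base d)%nat) u -> (val d u < base d ^ length u)%nat.
Proof.
  induction 1; simpl; [lia|].
  unfold val in *. simpl. nia.
Qed.

Lemma divmod_uniq b r a X Y : (r < b)%nat -> (a < b)%nat -> (r + b * X = a + b * Y)%nat -> r = a /\ X = Y.
Proof.
  intros Hr Ha H.
  assert (X = Y).
  { destruct (Nat.lt_total X Y) as [H1|[H1|H1]]; auto; nia. }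
  subst. lia.
Qed.

Lemma digits_mod d u : Forall (fun a => (a < base d)%nat) u -> forall m,
  (forall k, (k < length u)%nat -> digit d k m = nth k u 0%nat) <->
  (m mod base d ^ length u = val d u)%nat.
Proof.
  induction 1 as [|a u Ha Hu IH]; intros m.
  - simpl length. rewrite Nat.pow_0_r, Nat.mod_1_r. split; intros; [reflexivity| simpl in *; lia].
  - simpl length. rewrite Nat.pow_succ_r', Nat.Div0.mod_mul_r. simpl val.
    pose proof (base_pos d).
    assert (Hmb : (m mod base d < base d)%nat) by (apply Nat.mod_upper_bound; lia).
    split.
    + intros Hall.
      assert (m mod base d = a)%nat.
      { rewrite <- digit_0. apply (Hall 0%nat). lia. }
      assert ((m / base d) mod base d ^ length u = val d u)%nat.
      { apply IH. intros k Hk. rewrite <- digit_S. apply (Hall (S k)). lia. }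
      lia.
    + intros Heq. apply divmod_uniq in Heq; auto. destruct Heq as [H1 H2].
      intros [|k] Hk.
      * rewrite digit_0. simpl. auto.
      * rewrite digit_S. simpl. apply IH; auto. lia.
Qed.

Lemma and_dec_true (P Q : Prop) (dp : {P} + {~P}) (dq : {Q} + {~Q}) :
  andb (if dp then true else false) (if dq then true else false) = true <-> P /\ Q.
Proof. destruct dp, dq; simpl; intuition discriminate. Qed.

Lemma in_cube_iff d u n : (1 <= d)%nat -> Forall (fun a => (a < base d)%nat) u ->
  (in_cube_b d u (x_coord d n) = true <-> ((n - 1) mod base d ^ length u = val d u)%nat).
Proof.
  intros hd Hu.
  assert (Hb : (1 < base d)%nat).
  { unfold base. assert (2 ^ 1 <= 2 ^ d)%nat by (apply Nat.pow_le_mono_r; lia). simpl in *. lia. }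
  assert (Hm : (n - 1 < base d ^ n)%nat).
  { pose proof (Nat.pow_gt_lin_r (base d) n Hb). lia. }
  rewrite <- digits_mod by auto.
  unfold in_cube_b. rewrite forallb_forall.
  assert (Hx : forall j, x_coord d n j = Ssum d j (n - 1) (n + length u)).
  { intros j. rewrite Ssum_ext by auto. reflexivity. }
  split.
  - intros H k Hk.
    apply (eps_inj d).
    + unfold digit. apply Nat.mod_upper_bound. lia.
    + rewrite Forall_forall in Hu. apply Hu. apply nth_In. auto.
    + intros j Hj. specialize (H j). rewrite in_seq in H. specialize (H ltac:(lia)).
      rewrite and_dec_true, Hx in H.
      rewrite (cube_char d j u (n-1) (n + length u)) in H by lia.
      apply H. auto.
  - intros H j Hj. rewrite in_seq in Hj. rewrite and_dec_true, Hx.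
    rewrite (cube_char d j u (n-1) (n + length u)) by lia.
    intros k Hk. rewrite H by auto. reflexivity.
Qed.

Definition cnt (q r N : nat) : nat :=
  length (filter (fun n => Nat.eqb ((n - 1) mod q) r) (seq 1 N)).

Lemma cnt_S q r N : cnt q r (S N) = (cnt q r N + (if Nat.eqb (N mod q) r then 1 else 0))%nat.
Proof.
  unfold cnt. rewrite seq_S, filter_app, length_app. simpl.
  replace (N - 0)%nat with N by lia.
  destruct (Nat.eqb (N mod q) r); simpl; lia.
Qed.

Lemma cnt_inner q r a : (0 < q)%nat -> (r < q)%nat -> cnt q r (q * a) = a ->
  forall s, (s <= q)%nat -> cnt q r (q * a + s) = (a + (if Nat.ltb r s then 1 else 0))%nat.
Proof.
  intros Hq Hr H0 s. induction s; intros Hs.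
  - rewrite Nat.add_0_r, H0. destruct (Nat.ltb_spec r 0); lia.
  - rewrite Nat.add_succ_r, cnt_S, IHs by lia.
    replace ((q * a + s) mod q)%nat with s.
    2:{ rewrite Nat.add_comm, Nat.mul_comm, Nat.Div0.mod_add, Nat.mod_small; lia. }
    destruct (Nat.ltb_spec r s), (Nat.eqb_spec s r), (Nat.ltb_spec r (S s)); lia.
Qed.

Lemma cnt_block q r : (0 < q)%nat -> (r < q)%nat -> forall a,
  cnt q r (q * a) = a.
Proof.
  intros Hq Hr a. induction a.
  - rewrite Nat.mul_0_r. reflexivity.
  - rewrite Nat.mul_succ_r, (cnt_inner q r a) by auto.
    destruct (Nat.ltb_spec r q); lia.
Qed.

Lemma cnt_bounds q r N : (0 < q)%nat -> (r < q)%nat ->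
  (floor_div N q <= cnt q r N <= ceil_div N q)%nat.
Proof.
  intros Hq Hr. unfold floor_div, ceil_div.
  pose proof (Nat.mod_upper_bound N q ltac:(lia)).
  assert (Hc : cnt q r (q * (N / q) + N mod q) = (N / q + (if Nat.ltb r (N mod q) then 1 else 0))%nat).
  { apply cnt_inner; auto using cnt_block. lia. }
  rewrite <- Nat.div_mod_eq in Hc. rewrite Hc.
  pose proof (Nat.div_mod_eq N q).
  set (Q := (N / q)%nat) in *. set (s := (N mod q)%nat) in *.
  destruct (Nat.ltb_spec r s).
  - split; [lia|]. apply Nat.div_le_lower_bound; [lia|]. rewrite Nat.mul_add_distr_l. lia.
  - split; [lia|]. rewrite Nat.add_0_r. apply Nat.div_le_lower_bound; lia.
Qed.
Lemma exp_le' x y : x <= y -> exp x <= exp y.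
Proof. intros H; destruct (Rle_lt_or_eq_dec _ _ H) as [H'|H']; [left; apply exp_increasing; auto| subst; lra]. Qed.

Lemma ln_le' x y : 0 < x -> x <= y -> ln x <= ln y.
Proof. intros Hx H; destruct (Rle_lt_or_eq_dec _ _ H) as [H'|H']; [left; apply ln_increasing; auto| subst; lra]. Qed.

Lemma ln_base_pow d k : ln (INR (base d ^ k)) = INR d * INR k * ln 2.
Proof.
  unfold base. rewrite <- Nat.pow_mul_r, pow_INR, ln_pow by (simpl; lra).
  rewrite mult_INR. replace (INR 2) with 2 by (simpl; lra). ring.
Qed.

Lemma inv_pow2 L : / 2 ^ L = exp (- (INR L * ln 2)).
Proof.
  rewrite exp_Ropp, <- ln_pow by lra. rewrite exp_ln; [reflexivity|].
  apply pow_lt; lra.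
Qed.

Lemma part1 (d N L : nat)
  (hd : (2 <= d)%nat) (hN : (1 <= N)%nat)
  (hL : (N <= base d ^ L)%nat /\ (forall l : nat, (N <= base d ^ l)%nat -> (L <= l)%nat)) :
  (/ 2 ^ L <= Rpower (INR N) (- / INR d) <= 2 * / 2 ^ L).
Proof.
  destruct hL as [h1 h2].
  assert (Hd : 0 < INR d) by (apply lt_0_INR; lia).
  assert (HN : 0 < INR N) by (apply lt_0_INR; lia).
  assert (Hc : 0 < ln 2) by (pose proof ln_lt_2; lra).
  unfold Rpower. rewrite inv_pow2. split.
  - apply exp_le'.
    assert (ln (INR N) <= INR d * INR L * ln 2).
    { rewrite <- ln_base_pow. apply ln_le'; auto. apply le_INR; auto. }
    assert (ln (INR N) * / INR d <= INR L * ln 2).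
    { apply Rle_trans with (INR d * INR L * ln 2 * / INR d).
      - apply Rmult_le_compat_r; auto. left; apply Rinv_0_lt_compat; auto.
      - right; field; lra. }
    lra.
  - destruct L as [|L'].
    + assert (N = 1%nat) by (simpl in h1; lia). subst. simpl INR. rewrite ln_1.
      replace (- / INR d * 0) with 0 by ring.
      replace (- (0 * ln 2)) with 0 by ring. rewrite exp_0. lra.
    + assert (hlt : (base d ^ L' < N)%nat).
      { destruct (Nat.lt_ge_cases (base d ^ L') N); auto. apply h2 in H. lia. }
      assert (INR d * INR L' * ln 2 <= ln (INR N)).
      { rewrite <- ln_base_pow. apply ln_le'.
        - apply lt_0_INR. pose proof (base_pos d). apply Nat.neq_0_lt_0, Nat.pow_nonzero. lia.
        - apply le_INR; lia. }
      assert (INR L' * ln 2 <= ln (INR N) * / INR d).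
      { apply Rle_trans with (INR d * INR L' * ln 2 * / INR d).
        - right; field; lra.
        - apply Rmult_le_compat_r; auto. left; apply Rinv_0_lt_compat; auto. }
      rewrite S_INR.
      replace 2 with (exp (ln 2)) at 1 by (apply exp_ln; lra).
      rewrite <- exp_plus. apply exp_le'. lra.
Qed.

Lemma M_eq d N l u : (1 <= d)%nat -> is_word d l u -> M d N u = cnt (base d ^ l) (val d u) N.
Proof.
  intros hd [Hlen Hu]. subst l. unfold M, cnt. f_equal. apply filter_ext. intros n.
  destruct (in_cube_b d u (x_coord d n)) eqn:E; symmetry.
  - apply Nat.eqb_eq. apply in_cube_iff; auto.
  - apply Nat.eqb_neq. intros H. apply (in_cube_iff d u n hd Hu) in H. congruence.
Qed.

Theorem lemma2p6 (d N L : nat)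
  (hd : (2 <= d)%nat) (hN : (1 <= N)%nat)
  (hL : (N <= base d ^ L)%nat /\ (forall l : nat, (N <= base d ^ l)%nat -> (L <= l)%nat)) :
  (/ 2 ^ L <= Rpower (INR N) (- / INR d) <= 2 * / 2 ^ L) /\
  (forall (l : nat) (u : list nat), (l + 2 <= L)%nat -> is_word d l u ->
     (floor_div N (base d ^ l) <= M d N u <= ceil_div N (base d ^ l))%nat) /\
  ((base d ^ 2 < N)%nat -> forall u : list nat, is_word d (L - 2) u ->
     (base d <= M d N u)%nat).
Proof.
  pose proof (base_pos d) as Hb0.
  assert (Hpos : forall l, (0 < base d ^ l)%nat).
  { intros l. apply Nat.neq_0_lt_0, Nat.pow_nonzero. lia. }
  assert (P2 : forall (l : nat) (u : list nat), is_word d l u ->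
     (floor_div N (base d ^ l) <= M d N u <= ceil_div N (base d ^ l))%nat).
  { intros l u Hw. rewrite (M_eq d N l u) by (auto; lia).
    apply cnt_bounds; auto. destruct Hw as [Hlen Hu]. subst l. apply val_lt; auto. }
  split; [apply part1; auto|].
  split; [intros l u _ Hw; apply P2; auto|].
  intros Hgt u Hw.
  destruct hL as [h1 h2].
  assert (HL : (3 <= L)%nat).
  { destruct (Nat.le_gt_cases 3 L); auto.
    assert (base d ^ L <= base d ^ 2)%nat by (apply Nat.pow_le_mono_r; lia). lia. }
  assert (Hlt : (base d ^ (L - 1) < N)%nat).
  { destruct (Nat.lt_ge_cases (base d ^ (L - 1)) N); auto. apply h2 in H. lia. }
  replace (L - 1)%nat with (S (L - 2)) in Hlt by lia.
  rewrite Nat.pow_succ_r' in Hlt.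
  destruct (P2 (L - 2)%nat u Hw) as [Hf _].
  eapply Nat.le_trans; [|exact Hf]. unfold floor_div.
  apply Nat.div_le_lower_bound; [specialize (Hpos (L-2)%nat); lia|]. nia.
Qed.
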